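(* For all $1\leq n<\omega$, $\Theta_n\geq\aleph_n$.
   Context: For $1\leq n<\omega$, $\Theta_n$ is the least cardinal $\theta$ such that for every function $f:\theta^n\to\omega$ there is a sequence $\langle A_i\mid i<n\rangle$ of infinite subsets of $\theta$ such that $f\restriction\prod_{i<n}A_i$ is constant. *)

(* Defs.v *)
From Stdlib Require Import List Arith.

Definition finite_set {T : Type} (A : T -> Prop) : Prop :=
  exists l : list T, forall x, A x -> In x l.
Definition infinite_set {T : Type} (A : T -> Prop) : Prop := ~ finite_set A.

Definition strict_well_order {T : Type} (R : T -> T -> Prop) : Prop :=
  (forall x y z, R x y -> R y z -> R x z) /\
  (forall x y, R x y \/ x = y \/ R y x) /\
  well_founded R.

(* card_le_aleph k T  <->  |T| <= aleph_k.
   aleph_0: T injects into nat.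
   aleph_(k+1): T carries a well-order all of whose proper initial segments
   have cardinality <= aleph_k (i.e. order type <= omega_(k+1)). *)
Fixpoint card_le_aleph (k : nat) (T : Type) : Prop :=
  match k with
  | 0 => exists g : T -> nat, forall x y, g x = g y -> x = y
  | S k' => exists R : T -> T -> Prop, strict_well_order R /\
              forall x : T, card_le_aleph k' {y : T | R y x}
  end.

(* The partition property defining Theta_n for the "cardinal" T:
   every f : T^n -> omega is constant on some product of n infinite sets. *)
Definition Theta_property (n : nat) (T : Type) : Prop :=
  forall f : ({i : nat | i < n} -> T) -> nat,
    exists A : {i : nat | i < n} -> T -> Prop,
      (forall i, infinite_set (A i)) /\
      exists c : nat, forall x : {i : nat | i < n} -> T,
        (forall i, A i (x i)) -> f x = c.

(* Main.v *)
Require Import Defs.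
From Stdlib Require Import List Arith Lia Classical ClassicalEpsilon FunctionalExtensionality.

Definition Good (n:nat) (T:Type) (f : ({i:nat|i<n} -> T) -> nat) : Prop :=
  forall A : {i|i<n} -> T -> Prop, (forall i, infinite_set (A i)) ->
  forall c, ~ (forall x, (forall i, A i (x i)) -> f x = c).

Lemma sig_eq_gen {X} {P : X -> Prop} (a b : sig P) : proj1_sig a = proj1_sig b -> a = b.
Proof. destruct a, b; simpl; intros ->. f_equal. apply proof_irrelevance. Qed.

Lemma sig_nat_eq {n} (a b : {i|i<n}) : proj1_sig a = proj1_sig b -> a = b.
Proof. apply sig_eq_gen. Qed.

Lemma inf_nonempty {T} (A:T->Prop): infinite_set A -> exists y, A y.
Proof. intros H. apply NNPP; intro N. apply H. exists nil. intros x Hx. apply N; eauto. Qed.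

Lemma inf_two {T} (A:T->Prop) a: infinite_set A -> exists b, A b /\ b <> a.
Proof.
  intros H. apply NNPP; intro N. apply H. exists (a::nil). intros x Hx. left.
  destruct (classic (x = a)); auto. exfalso; apply N; eauto.
Qed.

Lemma wf_irrefl {T} (R:T->T->Prop): well_founded R -> forall a, ~R a a.
Proof. intros W a. induction (W a) as [a _ IH]. intro H. exact (IH a H H). Qed.

Lemma max_exists {T} (R:T->T->Prop) N (x : {i|i<N} -> T) :
  strict_well_order R -> 0 < N -> exists j, forall i, ~ R (x j) (x i).
Proof.
  intros [Htr [Htri Hwf]] HN.
  assert (H : forall m, exists j, forall i, proj1_sig i < m -> ~ R (x j) (x i)).
  { induction m.
    - exists (exist _ 0 HN). intros i Hi; lia.
    - destruct IHm as [j Hj]. destruct (lt_dec m N) as [Hm|Hm].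
      + destruct (classic (R (x j) (x (exist _ m Hm)))) as [Hr|Hr].
        * exists (exist _ m Hm). intros i Hi HR.
          destruct (Nat.eq_dec (proj1_sig i) m) as [E|E].
          -- replace i with (exist (fun i => i<N) m Hm) in HR by (apply sig_nat_eq; simpl; auto).
             apply (wf_irrefl R Hwf _ HR).
          -- apply (Hj i); [lia| eauto].
        * exists j. intros i Hi. destruct (Nat.eq_dec (proj1_sig i) m) as [E|E].
          -- replace i with (exist (fun i => i<N) m Hm) by (apply sig_nat_eq; simpl; auto). auto.
          -- apply Hj; lia.
      + exists j. intros i Hi. apply Hj. destruct i; simpl in *; lia. }
  destruct (H N) as [j Hj]. exists j. intros i. apply Hj. destruct i; simpl; lia.
Qed.

Lemma enc_inj N j1 j2 g1 g2 : j1 < N -> j2 < N -> j1 + N*g1 = j2 + N*g2 -> j1 = j2 /\ g1 = g2.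
Proof.
  intros. destruct (lt_eq_lt_dec g1 g2) as [[H2|H2]|H2]; [exfalso; nia | subst; lia | exfalso; nia].
Qed.

Definition bumpn j k := if k <? j then k else S k.
Definition unbumpn k' j i := min (if i <? j then i else pred i) k'.

Lemma bumpn_lt k' j k : k < S k' -> bumpn j k < S (S k').
Proof. unfold bumpn; destruct (Nat.ltb_spec k j); lia. Qed.
Lemma bumpn_neq j k : bumpn j k <> j.
Proof. unfold bumpn; destruct (Nat.ltb_spec k j); lia. Qed.
Lemma unbumpn_lt k' j i : unbumpn k' j i < S k'.
Proof. unfold unbumpn; lia. Qed.
Lemma bump_unbumpn k' j i : i < S (S k') -> j < S (S k') -> i <> j -> bumpn j (unbumpn k' j i) = i.
Proof. intros. unfold bumpn, unbumpn; destruct (Nat.ltb_spec i j);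
  [destruct (Nat.ltb_spec (Nat.min i k') j) | destruct (Nat.ltb_spec (Nat.min (pred i) k') j)]; lia. Qed.
Lemma unbump_bumpn k' j k : k < S k' -> unbumpn k' j (bumpn j k) = k.
Proof. intros. unfold bumpn, unbumpn; destruct (Nat.ltb_spec k j);
  [destruct (Nat.ltb_spec k j) | destruct (Nat.ltb_spec (S k) j)]; lia. Qed.

Definition bump k (j : {i|i<S (S k)}) (kk : {i|i<S k}) : {i|i<S(S k)} :=
  exist _ (bumpn (proj1_sig j) (proj1_sig kk)) (bumpn_lt _ _ _ (proj2_sig kk)).
Definition unbump k (j : {i|i<S(S k)}) (i : {i|i<S(S k)}) : {i|i<S k} :=
  exist _ (unbumpn k (proj1_sig j) (proj1_sig i)) (unbumpn_lt k _ _).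

Lemma bump_neq k j kk : bump k j kk <> j.
Proof. intro E. apply (f_equal (@proj1_sig _ _)) in E. simpl in E. apply (bumpn_neq _ _ E). Qed.
Lemma bump_unbump k j i : i <> j -> bump k j (unbump k j i) = i.
Proof. intros H. apply sig_nat_eq. simpl. apply bump_unbumpn; try apply proj2_sig.
  intro E; apply H; apply sig_nat_eq; auto. Qed.
Lemma unbump_bump k j kk : unbump k j (bump k j kk) = kk.
Proof. apply sig_nat_eq. simpl. apply unbump_bumpn. apply proj2_sig. Qed.

Lemma base T : card_le_aleph 0 T -> exists f, Good 1 T f.
Proof.
  intros [g Hg].
  set (i0 := exist (fun i => i<1) 0 Nat.lt_0_1).
  assert (Hall : forall i : {i|i<1}, i = i0) by (intros [i Hi]; apply sig_nat_eq; simpl; lia).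
  exists (fun x => g (x i0)). intros A HA c Hc.
  destruct (inf_nonempty _ (HA i0)) as [y0 Hy0].
  apply (HA i0). exists (y0::nil). intros y Hy. left. apply Hg.
  rewrite (Hc (fun _ => y0)), (Hc (fun _ => y)); auto.
  - intros i. rewrite (Hall i). auto.
  - intros i. rewrite (Hall i). auto.
Qed.

Lemma step k : (forall T, card_le_aleph k T -> exists f, Good (S k) T f) ->
  forall T, card_le_aleph (S k) T -> exists f, Good (S (S k)) T f.
Proof.
  intros IH T [R [HR Hseg]].
  pose proof HR as [Htr [Htri Hwf]].
  assert (Hfam: forall a, exists f, Good (S k) {y|R y a} f) by (intro a; apply IH, Hseg).
  set (fam := fun a => epsilon (inhabits (fun _ : {i|i<S k} -> {y|R y a} => 0))
                               (fun f => Good (S k) {y|R y a} f)).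
  assert (Hfam': forall a, Good (S k) _ (fam a)) by (intro a; apply (epsilon_spec _ _ (Hfam a))).
  assert (H0N : 0 < S (S k)) by lia.
  set (i00 := exist (fun i => i < S (S k)) 0 H0N).
  set (jx := fun x : {i|i<S (S k)} -> T =>
               epsilon (inhabits i00) (fun j => forall i, ~ R (x j) (x i))).
  assert (Hjx: forall x i, ~ R (x (jx x)) (x i))
    by (intros x; apply (epsilon_spec _ _ (max_exists R (S (S k)) x HR H0N))).
  set (G := fun (x : {i|i<S (S k)} -> T) (j : {i|i<S (S k)}) =>
     match excluded_middle_informative (forall i, i <> j -> R (x i) (x j)) with
     | left H => fam (x j) (fun kk => exist (fun y => R y (x j)) (x (bump k j kk)) (H _ (bump_neq k j kk)))
     | right _ => 0 end).
  exists (fun x => proj1_sig (jx x) + S (S k) * G x (jx x)).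
  intros A HA c Hc.
  destruct (inf_nonempty _ (HA i00)) as [t _].
  set (x0 := fun i => epsilon (inhabits t) (A i)).
  assert (Hx0 : forall i, A i (x0 i)) by (intro i; apply (epsilon_spec _ _ (inf_nonempty _ (HA i)))).
  set (j := jx x0).
  assert (Hj : forall x, (forall i, A i (x i)) -> jx x = j /\ G x (jx x) = G x0 j).
  { intros x Hx. pose proof (Hc x Hx) as E1. pose proof (Hc x0 Hx0) as E2. rewrite <- E2 in E1.
    destruct (enc_inj _ _ _ _ _ (proj2_sig (jx x)) (proj2_sig (jx x0)) E1) as [E3 E4].
    split; [apply sig_nat_eq; exact E3 | exact E4]. }
  destruct (inf_two _ (x0 j) (HA j)) as [b [Hb Hbne]].
  assert (exists lo hi, A j lo /\ A j hi /\ R lo hi) as [lo [hi [Hlo [Hhi Hlh]]]].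
  { destruct (Htri b (x0 j)) as [H|[H|H]]; [exists b, (x0 j) | congruence | exists (x0 j), b]; auto. }
  assert (Hbelow : forall i y, i <> j -> A i y -> R y hi).
  { intros i y Hij Hy.
    set (x := fun i' => if Nat.eq_dec (proj1_sig i') (proj1_sig j) then lo
                        else if Nat.eq_dec (proj1_sig i') (proj1_sig i) then y else x0 i').
    assert (Hx : forall i', A i' (x i')).
    { intro i'. unfold x. destruct Nat.eq_dec as [E|E].
      - replace i' with j by (apply sig_nat_eq; auto). exact Hlo.
      - destruct Nat.eq_dec as [E'|E'].
        + replace i' with i by (apply sig_nat_eq; auto); auto.
        + auto. }
    destruct (Hj x Hx) as [E _]. pose proof (Hjx x i) as Hm. rewrite E in Hm.
    assert (H1 : x j = lo) by (unfold x; destruct Nat.eq_dec; [auto| congruence]).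
    assert (H2 : x i = y).
    { unfold x. destruct Nat.eq_dec as [E1|E1].
      - exfalso; apply Hij; apply sig_nat_eq; auto.
      - destruct Nat.eq_dec; [auto|congruence]. }
    rewrite H1, H2 in Hm. destruct (Htri y lo) as [H3|[H3|H3]]; [eauto | rewrite H3; auto | contradiction]. }
  set (A' := fun kk (s : {y|R y hi}) => A (bump k j kk) (proj1_sig s)).
  assert (HA' : forall kk, infinite_set (A' kk)).
  { intros kk [l Hl]. apply (HA (bump k j kk)). exists (map (@proj1_sig _ _) l). intros y Hy.
    specialize (Hl (exist _ y (Hbelow _ _ (bump_neq k j kk) Hy)) Hy).
    apply (in_map (@proj1_sig _ _)) in Hl. exact Hl. }
  apply (Hfam' hi A' HA' (G x0 j)). intros z Hz.
  set (x := fun i => if Nat.eq_dec (proj1_sig i) (proj1_sig j) then hi else proj1_sig (z (unbump k j i))).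
  assert (Hne : forall i, i <> j -> proj1_sig i <> proj1_sig j)
    by (intros i H E; apply H, sig_nat_eq, E).
  assert (Hx: forall i, A i (x i)).
  { intro i. unfold x. destruct Nat.eq_dec as [E|E].
    - replace i with j by (apply sig_nat_eq; auto). exact Hhi.
    - specialize (Hz (unbump k j i)). unfold A' in Hz. rewrite bump_unbump in Hz; auto.
      intro; subst; auto. }
  destruct (Hj x Hx) as [E1 E2]. rewrite E1 in E2. rewrite <- E2.
  assert (Exj : x j = hi) by (unfold x; destruct Nat.eq_dec; congruence).
  assert (Hxi : forall i, i <> j -> R (x i) hi).
  { intros i Hi. unfold x. destruct Nat.eq_dec as [E|E]; [exfalso; apply (Hne i Hi E)|].
    apply proj2_sig. }
  unfold G. destruct excluded_middle_informative as [H|H].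
  - assert (Hgen : forall a (e : a = hi) (H' : forall kk, R (x (bump k j kk)) a),
              fam a (fun kk => exist (fun y => R y a) (x (bump k j kk)) (H' kk)) = fam hi z).
    { intros a e. subst a. intros H'. f_equal. apply functional_extensionality. intros kk.
      apply sig_eq_gen. simpl. unfold x. destruct Nat.eq_dec as [E|E].
      - exfalso. apply (bump_neq k j kk). apply sig_nat_eq; auto.
      - rewrite unbump_bump. reflexivity. }
    symmetry; exact (Hgen (x j) Exj (fun kk => H _ (bump_neq k j kk))).
  - exfalso. apply H. intros i Hi. rewrite Exj. apply Hxi; auto.
Qed.

Lemma main k : forall T, card_le_aleph k T -> exists f, Good (S k) T f.
Proof. induction k; [apply base | apply step; auto]. Qed.

Theorem corollary5p3 :
  forall n : nat, 1 <= n ->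
  forall T : Type, card_le_aleph (n - 1) T -> ~ Theta_property n T.
Proof.
  intros n Hn T HT HP. destruct n; [lia|].
  replace (S n - 1) with n in HT by lia.
  destruct (main n T HT) as [f Hf]. destruct (HP f) as [A [HA [c Hc]]].
  exact (Hf A HA c Hc).
Qed.
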